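(* Let $G$ be a connected graph with vertex set $\{u_1,\dots,u_m\}$ and $\kappa(G)=\delta(G)>0$, and let $n\ge 3$. Let $S\subseteq V(G\times K_n)$ satisfy: (1) $|S|=(n-1)\delta(G)$; (2) $S_i':=S_i\setminus S\neq\varnothing$ for every $i=1,\dots,m$; (3) $G\times K_n-S$ has no isolated vertex. Then the graph $G^*$ associated with $G$ and $S$ is connected.
   Context: The Kronecker product $G_1\times G_2$ has vertex set $V(G_1)\times V(G_2)$, with $(u_1,v_1)(u_2,v_2)$ an edge iff $u_1u_2\in E(G_1)$ and $v_1v_2\in E(G_2)$. Write $V(K_n)=\{v_1,\dots,v_n\}$ and $S_i=\{u_i\}\times V(K_n)$ for $i=1,\dots,m$. Given $S$ as in the statement, $G^*$ is the graph with vertex set $\{S_1',\dots,S_m'\}$ in which $S_i'S_j'$ is an edge iff $G\times K_n-S$ contains an edge with one end in $S_i'$ and the other in $S_j'$. *)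

(* Defs.v *)
From mathcomp Require Import all_boot.
Set Implicit Arguments. Unset Strict Implicit. Unset Printing Implicit Defensive.

Definition sgraph (T : finType) (e : rel T) : Prop := symmetric e /\ irreflexive e.

Definition rel_on (T : finType) (e : rel T) (A : {set T}) : rel T :=
  [rel x y | [&& x \in A, y \in A & e x y]].

Definition connected_on (T : finType) (e : rel T) (A : {set T}) : Prop :=
  forall x y, x \in A -> y \in A -> connect (rel_on e A) x y.

Definition gconnected (T : finType) (e : rel T) : Prop := connected_on e setT.

Definition degree (T : finType) (e : rel T) (x : T) : nat := #|[set y | e x y]|.

Definition mindeg (T : finType) (e : rel T) : nat :=
  \big[minn/#|T|]_(x : T) degree e x.

(* X is a vertex cut (in the broad sense): G - X is disconnected or has <= 1 vertex *)
Definition sepset (T : finType) (e : rel T) (X : {set T}) : bool :=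
  ~~ [forall x in ~: X, forall y in ~: X, connect (rel_on e (~: X)) x y]
  || (#|~: X| <= 1).

Definition kappa (T : finType) (e : rel T) : nat :=
  \big[minn/#|T|]_(X : {set T} | sepset e X) #|X|.

Definition kronK (T : finType) (e : rel T) (n : nat) : rel (T * 'I_n) :=
  [rel x y | e x.1 y.1 && (x.2 != y.2)].

(* the graph G^* on the index set V(G): u ~ w iff G x K_n - S has an edge
   between S_u' = ({u} x V(K_n)) \ S and S_w' *)
Definition Gstar (T : finType) (e : rel T) (n : nat) (S : {set T * 'I_n}) : rel T :=
  [rel u w | [exists x : T * 'I_n, exists y : T * 'I_n,
     [&& x \notin S, y \notin S, x.1 == u, y.1 == w & @kronK T e n x y]]].

(* Main.v *)
Require Import Defs.
From mathcomp Require Import all_boot zify.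
Set Implicit Arguments. Unset Strict Implicit. Unset Printing Implicit Defensive.

Lemma bigmin_le (I : finType) (P : pred I) (F : I -> nat) x0 i :
  P i -> \big[minn/x0]_(j | P j) F j <= F i.
Proof.
move=> Pi; have : i \in index_enum I by rewrite mem_index_enum.
elim: (index_enum I) => [//|j r IH]; rewrite inE big_cons.
case/orP=> [/eqP <-|ir]; first by rewrite Pi geq_minl.
case: (P j); last exact: IH.
exact: leq_trans (geq_minr _ _) (IH ir).
Qed.

Lemma mindeg_lt (T : finType) (e : rel T) (x : T) :
  irreflexive e -> mindeg e < #|T|.
Proof.
move=> irr; apply: (leq_ltn_trans (@bigmin_le T xpredT (degree e) #|T| x isT)).
rewrite /degree.
have: [set y | e x y] \subset ~: [set x].
  by apply/subsetP=> y; rewrite !inE => exy; apply/eqP=> Exy; rewrite Exy irr in exy.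
move/subset_leq_card => h.
have := cardsC [set x]; rewrite cards1; lia.
Qed.

Lemma count_rows (T : finType) n (S : {set T * 'I_n}) (Z : {set T}) k :
  (forall u, u \in Z -> #|[set v | (u,v) \in S]| = k) -> #|Z| * k <= #|S|.
Proof.
move=> H.
have -> : #|Z| * k = \sum_(u in Z) \sum_(v in [set v | (u,v) \in S]) 1.
  rewrite -sum_nat_const; apply: eq_bigr => u Hu; by rewrite sum1_card H.
rewrite pair_big_dep /= sum1_card; apply: subset_leq_card.
apply/subsetP=> -[u v]; rewrite unfold_in /= => /andP[_]; by rewrite inE.
Qed.

Lemma sep_le (T : finType) (e : rel T) (P : {set T}) a b :
  symmetric e ->
  a \in P -> b \notin P ->
  a \notin [set u in P | [exists w, (w \notin P) && e u w]] ->
  kappa e <= #|[set u in P | [exists w, (w \notin P) && e u w]]|.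
Proof.
set D := [set u in P | _] => sym aP bP aD.
apply: bigmin_le; rewrite /sepset; apply/orP; left.
apply/negP=> /forallP /(_ a) /implyP => /(_ ltac:(by rewrite inE)).
move/forallP/(_ b)/implyP => /(_ ltac:(by rewrite !inE (negbTE bP))) C.
have cl : closed (rel_on e (~: D)) P.
  move=> x y; rewrite /rel_on /= !inE => /and3P [xD yD exy].
  apply/idP/idP => [xP|yP]; apply/negPn/negP => nP.
  - by move: xD; rewrite xP /=; case/negP; apply/existsP; exists y; rewrite nP.
  - by move: yD; rewrite yP /=; case/negP; apply/existsP; exists x; rewrite nP sym.
by move: (closed_connect cl C); rewrite aP (negbTE bP).
Qed.

Theorem lemma2p3 (T : finType) (e : rel T) (n : nat) (S : {set T * 'I_n}) :
  sgraph e -> gconnected e -> kappa e = mindeg e -> 0 < mindeg e ->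
  3 <= n ->
  #|S| = (n - 1) * mindeg e ->
  (forall u : T, exists v : 'I_n, (u, v) \notin S) ->
  (forall x : T * 'I_n, x \notin S ->
     exists y : T * 'I_n, (y \notin S) && @kronK T e n x y) ->
  gconnected (Gstar e S).
Proof.
move=> [sym irr] gc kd dpos n3 cardS rowne noiso x y _ _.
apply/negPn/negP => nc.
set g := rel_on (Gstar e S) setT.
set A := [set z | connect g x z].
have xA : x \in A by rewrite inE connect0.
have yA : y \notin A by rewrite inE.
have noedge : forall u w, u \in A -> w \notin A -> e u w ->
    forall a b, (u,a) \notin S -> (w,b) \notin S -> a = b.
  move=> u w uA wA euw a b ua wb; apply/eqP; apply: contraNT wA => ab.
  rewrite /A !inE in uA *. apply: (connect_trans uA); apply: connect1.
  rewrite /g /rel_on /= !in_setT /=; apply/existsP; exists (u,a); apply/existsP; exists (w,b).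
  by rewrite ua wb !eqxx /kronK /= euw ab.
have rowc : forall u w, e u w ->
    (forall a b, (u,a) \notin S -> (w,b) \notin S -> a = b) ->
    #|[set v | (u,v) \in S]| = n - 1.
  move=> u w euw H; have [a0 ua0] := rowne u; have [b0 wb0] := rowne w.
  have E : ~: [set v | (u,v) \in S] = [set b0].
    apply/setP => v; rewrite !inE; apply/idP/idP => [uv|/eqP ->].
      by rewrite (H _ _ uv wb0).
    by rewrite -(H _ _ ua0 wb0).
  have := cardsC [set v | (u,v) \in S]; rewrite E cards1 card_ord; lia.
set X := [set u in A | [exists w, (w \notin A) && e u w]].
set Y := [set u in ~: A | [exists w, (w \notin ~: A) && e u w]].
have rX : forall u, u \in X :|: Y -> #|[set v | (u,v) \in S]| = n - 1.
  move=> u; rewrite inE => /orP [].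
    rewrite inE => /andP [uA /existsP [w /andP [wA euw]]].
    by apply: (rowc u w euw); exact: noedge.
  rewrite inE => /andP [uA /existsP [w /andP [wA euw]]].
  apply: (rowc u w euw) => a b ua wb; symmetry; apply: (noedge w u) => //.
  - by rewrite inE negbK in wA.
  - by rewrite inE in uA.
  - by rewrite sym.
have cnt := count_rows rX.
have XY : #|X :|: Y| = #|X| + #|Y|.
  rewrite cardsU; suff -> : X :&: Y = set0 by rewrite cards0 subn0.
  apply/setP=> u; rewrite !inE; by case: (connect g x u); rewrite ?andbF.
have le : #|X| + #|Y| <= mindeg e.
  by rewrite XY cardS mulnC leq_pmul2l in cnt; last lia.
have [u [w [uA wA euw]]] : exists u w, [/\ u \in A, w \notin A & e u w].
  case: (boolP [exists u, exists w, [&& u \in A, w \notin A & e u w]]).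
    by move=> /existsP[u /existsP[w /and3P[? ? ?]]]; exists u, w.
  move=> H; exfalso.
  have cl : closed (rel_on e setT) A.
    move=> p q; rewrite /rel_on /= !in_setT /= => epq.
    apply/idP/idP => hp; apply/negPn/negP => hq; case/negP: H;
      apply/existsP; [exists p|exists q]; apply/existsP; [exists q|exists p].
      by rewrite hp hq epq.
    by rewrite hp hq sym epq.
  by move: (closed_connect cl (gc x y (in_setT x) (in_setT y))); rewrite xA (negbTE yA).
have X0 : 0 < #|X|.
  apply/card_gt0P; exists u; rewrite inE uA /=; apply/existsP; exists w; by rewrite wA euw.
have Y0 : 0 < #|Y|.
  apply/card_gt0P; exists w; rewrite inE; apply/andP; split; first by rewrite inE. apply/existsP; exists u; by rewrite inE negbK uA sym euw.
case: (boolP (A \subset X)) => [sAX|/subsetPn [a aA aX]]; last first.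
  have h : kappa e <= #|X| := sep_le sym aA yA aX; lia.
case: (boolP (~: A \subset Y)) => [sBY|/subsetPn [b bB bY]]; last first.
  have xB : x \notin ~: A by rewrite inE negbK.
  have h : kappa e <= #|Y| := sep_le sym bB xB bY; lia.
have := mindeg_lt x irr.
have := cardsC A; have := subset_leq_card sAX; have := subset_leq_card sBY; lia.
Qed.
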